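(* Let $\Omega\subset\mathbb{R}^n$ be a nonempty closed convex set and $f:\mathbb{R}^n\to\mathbb{R}$ differentiable over $\Omega$ such that (i) $f(\bm{x})\ge\underline{f}$ for all $\bm{x}\in\Omega$, (ii) $\|\nabla f(\bm{x})-\nabla f(\bm{y})\|_2\le L\|\bm{x}-\bm{y}\|_2$ for all $\bm{x},\bm{y}\in\Omega$ for some $L>0$, and (iii) the relaxation sequence $\{\omega_k\}\subset[0,\infty)$ satisfies $\sum_{k=0}^\infty\omega_k<\infty$. Suppose $\{\bm{x}_k\}$ is generated by either IGPM without line search or IGPM with line search (described in the context), with $\bm{z}_k$ the inexact projections and $\bm{z}_k^*$ the exact minimizer of $p(\cdot;\bm{x}_k)$. Then \[\lim_{k\to\infty}\Delta p(\bm{z}_k;\bm{x}_k)=0\quad\text{and}\quad\lim_{k\to\infty}\Delta p(\bm{z}_k^*;\bm{x}_k)=0.\]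
   Context: Problem: minimize $f(\bm{x})$ subject to $\bm{x}\in\Omega$. For $\bm{x}_k\in\Omega$ write $\bm{g}_k=\nabla f(\bm{x}_k)$, $\bm{v}_k=\bm{x}_k-\beta\bm{g}_k$ for a fixed $\beta>0$, and define $p(\bm{z};\bm{x}_k)=\tfrac12\|\bm{z}-\bm{v}_k\|_2^2+\delta_\Omega(\bm{z})$ ($\delta_\Omega$ the $0/+\infty$ indicator of $\Omega$), $\bm{z}_k^*=\arg\min_{\bm{z}}p(\bm{z};\bm{x}_k)$ (the Euclidean projection of $\bm{v}_k$ onto $\Omega$), $\Delta p(\bm{z};\bm{x}_k)=p(\bm{x}_k;\bm{x}_k)-p(\bm{z};\bm{x}_k)$, and $q(\bm{u};\bm{x}_k)=-\tfrac12\|\bm{u}-\bm{v}_k\|_2^2-\delta_\Omega^*(\bm{u})+\tfrac12\|\bm{v}_k\|_2^2$ with $\delta^*_\Omega(\bm{u})=\sup_{\bm{x}\in\Omega}\langle\bm{x},\bm{u}\rangle$. An inexact projection at iteration $k$ is a point $\bm{z}_k\in\Omega$ with $\Delta p(\bm{z}_k;\bm{x}_k)\ge0$ together with some dual point $\bm{u}_k$ such that $\frac{p(\bm{x}_k;\bm{x}_k)-p(\bm{z}_k;\bm{x}_k)+\omega_k}{p(\bm{x}_k;\bm{x}_k)-q(\bm{u}_k;\bm{x}_k)+\omega_k}\ge\gamma$, where $0<\gamma<1$. IGPM without line search: $0<\beta\le1/L$, $\bm{x}_0\in\Omega$, and $\bm{x}_{k+1}=\bm{z}_k$ for all $k$.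 IGPM with line search: fix $0<\eta<1$, $0<\alpha\le1$, $\beta>0$, $0<\theta<1$, $\bm{x}_0\in\Omega$; set $\bm{d}_k=\bm{z}_k-\bm{x}_k$, let $\alpha_k$ be the largest value in $\{\theta^i\alpha: i=0,1,2,\dots\}$ with $f(\bm{x}_k+\alpha_k\bm{d}_k)\le f(\bm{x}_k)+\eta\alpha_k\bm{g}_k^T\bm{d}_k$, and set $\bm{x}_{k+1}=\bm{x}_k+\alpha_k\bm{d}_k$. The algorithms are considered as generating infinite sequences. *)

(* Defs.v *)
From HB Require Import structures.
From mathcomp Require Import all_boot all_order all_algebra.
From mathcomp Require Import all_classical all_reals all_analysis.
Set Implicit Arguments. Unset Strict Implicit. Unset Printing Implicit Defensive.
Import Order.TTheory GRing.Theory Num.Theory.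
Import numFieldNormedType.Exports.
Local Open Scope classical_set_scope.
Local Open Scope ring_scope.

Section IGPM.
Variables (R : realType) (n : nat).
Notation vec := 'rV[R]_n.

Definition dotv (x y : vec) : R := \sum_(i < n) x ord0 i * y ord0 i.
Definition norm2 (x : vec) : R := Num.sqrt (dotv x x).

Definition convexR (Omega : set vec) : Prop :=
  convex_set (Omega : set (convex_lmodType vec)).

Definition is_gradient (f : vec -> R) (x g : vec) : Prop :=
  differentiable f x /\ forall v : vec, 'd f x v = dotv g v.

Definition vpt (beta : R) (x gx : vec) : vec := x - beta *: gx.

(* p(z; x_k) restricted to z in Omega, where the indicator vanishes *)
Definition pval (beta : R) (x gx z : vec) : R :=
  (norm2 (z - vpt beta x gx)) ^+ 2 / 2.

Definition Deltap (beta : R) (x gx z : vec) : R :=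
  pval beta x gx x - pval beta x gx z.

Definition suppf (Omega : set vec) (u : vec) : \bar R :=
  ereal_sup [set (dotv y u)%:E | y in Omega].

(* p(x_k;x_k) - q(u;x_k) + omega_k, as an extended real
   (q(u;x) = -1/2||u-v||^2 - delta^*(u) + 1/2||v||^2) *)
Definition gapden (Omega : set vec) (beta : R) (x gx u : vec) (om : R) : \bar R :=
  (pval beta x gx x + (norm2 (u - vpt beta x gx)) ^+ 2 / 2
     - (norm2 (vpt beta x gx)) ^+ 2 / 2 + om)%:E + suppf Omega u.

(* z is an inexact projection at x (with gradient gx) for relaxation om:
   z in Omega, Delta p(z;x) >= 0, and some dual point u satisfies
   (Delta p(z;x) + om) / (p(x;x) - q(u;x) + om) >= gamma,
   written in multiplied-out form. *)
Definition inexact_proj (Omega : set vec) (beta gamma : R) (x gx : vec) (om : R)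
    (z : vec) : Prop :=
  Omega z /\ 0 <= Deltap beta x gx z /\
  exists u : vec,
    (gamma%:E * gapden Omega beta x gx u om <= (Deltap beta x gx z + om)%:E)%E.

Definition IGPM_noLS (Omega : set vec) (g : vec -> vec) (L beta gamma : R)
    (omega : nat -> R) (x z : nat -> vec) : Prop :=
  0 < beta /\ beta <= 1 / L /\ Omega (x 0%N) /\
  forall k, inexact_proj Omega beta gamma (x k) (g (x k)) (omega k) (z k) /\
            x k.+1 = z k.

Definition armijo (f : vec -> R) (eta : R) (xk gk d : vec) (a : R) : Prop :=
  f (xk + a *: d) <= f xk + eta * a * dotv gk d.

Definition IGPM_LS (Omega : set vec) (f : vec -> R) (g : vec -> vec)
    (eta alpha beta theta gamma : R)
    (omega : nat -> R) (x z : nat -> vec) : Prop :=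
  0 < eta < 1 /\ 0 < alpha <= 1 /\ 0 < beta /\ 0 < theta < 1 /\ Omega (x 0%N) /\
  forall k, inexact_proj Omega beta gamma (x k) (g (x k)) (omega k) (z k) /\
    exists i : nat,
      armijo f eta (x k) (g (x k)) (z k - x k) (theta ^+ i * alpha) /\
      (forall j : nat, (j < i)%N ->
         ~ armijo f eta (x k) (g (x k)) (z k - x k) (theta ^+ j * alpha)) /\
      x k.+1 = x k + (theta ^+ i * alpha) *: (z k - x k).

End IGPM.

(* Main.v *)
Require Import Defs.
From HB Require Import structures.
From mathcomp Require Import all_boot all_order all_algebra.
From mathcomp Require Import all_classical all_reals all_analysis.
From mathcomp Require Import ring lra.
Import Order.TTheory GRing.Theory Num.Theory.
Import numFieldNormedType.Exports.
Local Open Scope classical_set_scope.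
Local Open Scope ring_scope.

Set Implicit Arguments. Unset Strict Implicit.

Section D.
Variables (R : realType) (n : nat).
Notation vec := 'rV[R]_n.
Implicit Types x y w : vec.

Lemma dotvC x y : dotv x y = dotv y x.
Proof. by apply: eq_bigr => i _; rewrite mulrC. Qed.
Lemma dotvDl x y w : dotv (x + y) w = dotv x w + dotv y w.
Proof. by rewrite /dotv -big_split; apply: eq_bigr => i _; rewrite !mxE mulrDl. Qed.
Lemma dotvZl (a : R) x w : dotv (a *: x) w = a * dotv x w.
Proof. by rewrite /dotv mulr_sumr; apply: eq_bigr => i _; rewrite !mxE mulrA. Qed.
Lemma dotvNl x w : dotv (- x) w = - dotv x w.
Proof. by rewrite -scaleN1r dotvZl mulN1r. Qed.
Lemma dotvBl x y w : dotv (x - y) w = dotv x w - dotv y w.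
Proof. by rewrite dotvDl dotvNl. Qed.
Lemma dotvDr x y w : dotv w (x + y) = dotv w x + dotv w y.
Proof. by rewrite dotvC dotvDl !(dotvC w). Qed.
Lemma dotvZr (a : R) x w : dotv w (a *: x) = a * dotv w x.
Proof. by rewrite dotvC dotvZl dotvC. Qed.
Lemma dotvBr x y w : dotv w (x - y) = dotv w x - dotv w y.
Proof. by rewrite dotvC dotvBl !(dotvC w). Qed.
Lemma dotv0l w : dotv 0 w = 0.
Proof. by rewrite -(scale0r (0 : vec)) dotvZl mul0r. Qed.
Lemma dotv_ge0 x : 0 <= dotv x x.
Proof. by apply: sumr_ge0 => i _; rewrite -expr2 sqr_ge0. Qed.
Lemma norm2_sq x : norm2 x ^+ 2 = dotv x x.
Proof. by rewrite /norm2 sqr_sqrtr // dotv_ge0. Qed.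
Lemma norm2_ge0 x : 0 <= norm2 x.
Proof. exact: sqrtr_ge0. Qed.
End D.
Section D2.
Variables (R : realType) (n : nat).
Lemma dotvNr (x w : 'rV[R]_n) : dotv w (- x) = - dotv w x.
Proof. by rewrite dotvC dotvNl dotvC. Qed.
End D2.


Section E.
Variables (R : realType) (n : nat).
Notation vec := 'rV[R]_n.

Lemma cross_bound (u d : vec) (L c : R) : 0 < L -> 0 <= c ->
  norm2 u <= L * norm2 (c *: d) -> dotv u d <= L * c * dotv d d.
Proof.
move=> L0 c0 h.
have Ec : norm2 (c *: d) ^+ 2 = c ^+ 2 * dotv d d.
  by rewrite norm2_sq dotvZl dotvZr mulrA expr2.
have hu : dotv u u <= L ^+ 2 * (c ^+ 2 * dotv d d).
  rewrite -norm2_sq -Ec -exprMn; apply: lerXn2r; rewrite ?nnegrE //.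
  - exact: norm2_ge0.
  - by apply: mulr_ge0; [apply: ltW|apply: norm2_ge0].
have [c00|cp] := eqVneq c 0.
  rewrite c00 in hu *.
  have : dotv u u <= 0 by move: hu; rewrite expr0n /= mul0r mulr0.
  move=> uu; have u0 : u = 0.
    apply/rowP => i; rewrite mxE; apply/eqP; rewrite -sqrf_eq0 eq_le sqr_ge0 andbT.
    apply: le_trans uu; rewrite /dotv (bigD1 i) //= -expr2 lerDl.
    by apply: sumr_ge0 => j _; rewrite -expr2 sqr_ge0.
  by rewrite u0 dotv0l mulr0 mul0r.
have cpos : 0 < c by rewrite lt_neqAle eq_sym cp c0.
have sq := dotv_ge0 (u - (L * c) *: d).
rewrite !(dotvBl, dotvBr, dotvZl, dotvZr) (dotvC d u) in sq.
set A := dotv u u in sq hu; set B := dotv u d in sq *; set D := dotv d d in sq hu *.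
have LC : 0 < L * c by rewrite mulr_gt0.
rewrite -subr_ge0. 
have : 0 <= (L * c) * (2 * (L * c * D - B)).
  apply: le_trans sq _. 
  have : A <= (L * c) ^+ 2 * D by rewrite exprMn -mulrA.
  move=> hA; rewrite -subr_ge0; set LCc := L * c in hA *.
  have -> : LCc * (2 * (LCc * D - B)) - (A - LCc * B - LCc * (B - LCc * D)) = LCc ^+ 2 * D - A by ring.
  by rewrite subr_ge0.
by rewrite pmulr_rge0 // pmulr_rge0.
Qed.
End E.


Section H.
Variables (R : realType) (n : nat).
Notation vec := 'rV[R]_n.

Lemma convex_seg (Omega : set vec) x z t : convexR Omega -> Omega x -> Omega z ->
  0 <= t -> t <= 1 -> Omega (x + t *: (z - x)).
Proof.
move=> cO Ox Oz t0 t1.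
have := cO z x (Itv01 t0 t1); rewrite !inE => /(_ Oz Ox).
congr Omega => /=.
by rewrite /conv /= /unstable.onem scalerBl scale1r scalerBr addrCA.
Qed.

Lemma phi_derive (f : vec -> R) x d c :
  differentiable f (x + c *: d) ->
  is_derive c 1 (fun s : R => f (x + s *: d)) ('d f (x + c *: d) d).
Proof.
move=> df.
have E : (fun h : R => h^-1 *: (((fun s : R => f (x + s *: d)) \o shift c) (h *: 1) - f (x + c *: d)))
  = (fun h : R => h^-1 *: ((f \o shift (x + c *: d)) (h *: d) - f (x + c *: d))).
  apply/funext => h /=; congr (_ *: (f _ - _)).
  by rewrite /shift scaler1 scalerDl addrCA addrA.
split.
  by rewrite /derivable E; apply: diff_derivable.
by rewrite /derive E -/(derive f _ d) deriveE.
Qed.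
End H.


Section F.
Variables (R : realType) (n : nat).
Notation vec := 'rV[R]_n.
Variables (Omega : set vec) (f : vec -> R) (g : vec -> vec) (L : R).
Hypothesis cO : convexR Omega.
Hypothesis grad : forall y, Omega y -> is_gradient f y (g y).
Hypothesis L0 : 0 < L.
Hypothesis Lip : forall y w, Omega y -> Omega w -> norm2 (g y - g w) <= L * norm2 (y - w).

Lemma descent x z t : Omega x -> Omega z -> 0 <= t -> t <= 1 ->
  f (x + t *: (z - x)) <= f x + t * dotv (g x) (z - x) + L * t ^+ 2 / 2 * dotv (z - x) (z - x).
Proof.
move=> Ox Oz t0 t1.
set d := z - x; set a := dotv (g x) d; set b := L * dotv d d / 2.
pose p : {poly R} := a *: 'X + b *: 'X^2.
have hp s : p.[s] = s * a + s ^+ 2 * b.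
  rewrite /p !hornerE /= /b; ring.
have hdp s : (deriv p).[s] = a + 2 * s * b.
  rewrite /p derivD !derivZ derivX derivXn !hornerE /= /b; ring.
have Oseg s : 0 <= s -> s <= 1 -> Omega (x + s *: d) by move=> s0 s1; exact: convex_seg.
pose psi : R -> R := fun s => f (x + s *: d) - p.[s].
pose dpsi := fun s => dotv (g (x + s *: d)) d - (deriv p).[s].
have Dpsi (s : R) : 0 <= s -> s <= 1 -> is_derive s 1 psi (dpsi s).
  move=> s0 s1; have [df dd] := grad (Oseg s s0 s1).
  have h1 := phi_derive df; rewrite dd in h1.
  exact: (is_deriveB h1 (is_derive_poly p s)).
have [c cI E] : exists2 c, c \in `[0, t] & psi t - psi 0 = dpsi c * (t - 0).
  apply: MVT_segment => //.
    move=> s; rewrite in_itv /= => /andP [s0 st].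
    by apply: Dpsi; [exact: ltW | exact: (le_trans (ltW st) t1)].
  apply: derivable_within_continuous => s; rewrite in_itv /= => /andP [s0 st].
  by have [] := Dpsi s s0 (le_trans st t1).
move: cI; rewrite in_itv /= => /andP [c0 ct].
have c1 : c <= 1 := le_trans ct t1.
have hd : dpsi c <= 0.
  rewrite /dpsi hdp.
  have hy : x + c *: d - x = c *: d by rewrite addrAC subrr add0r.
  have hL := Lip (Oseg c c0 c1) Ox; rewrite hy in hL.
  have cb := cross_bound L0 c0 hL.
  rewrite dotvBl in cb; rewrite /b /a.
  set G := dotv (g (x + c *: d)) d in cb *.
  set A := dotv (g x) d in cb *. set D := dotv d d in cb *.
  lra.
have : psi t <= psi 0.
  by rewrite -subr_le0 E subr0 mulr_le0_ge0.
rewrite /psi /= !hp scale0r addr0.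
rewrite /a /b; set D := dotv d d; set A := dotv (g x) d; set F := f (x + t *: d).
lra.
Qed.
End F.


Section G.
Variables (R : realType) (n : nat).
Notation vec := 'rV[R]_n.

Lemma Deltap_eq (beta : R) (x gx z : vec) :
  Deltap beta x gx z = - dotv (z - x) (z - x) / 2 - beta * dotv gx (z - x).
Proof.
rewrite /Deltap /pval /vpt !norm2_sq.
have -> : x - (x - beta *: gx) = beta *: gx by rewrite opprB addrC subrK.
have -> : z - (x - beta *: gx) = (z - x) + beta *: gx by rewrite opprB addrCA addrC.
move: (z - x) => d.
rewrite !(dotvDl, dotvDr, dotvZl, dotvZr) (dotvC gx d).
by field; rewrite ?pnatr_eq0.
Qed.

Lemma weak_dual (Omega : set vec) (beta gamma : R) (x gx w u : vec) (om Dz : R) :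
  0 <= gamma -> Omega w ->
  (gamma%:E * gapden Omega beta x gx u om <= Dz%:E)%E ->
  gamma * (Deltap beta x gx w + om) <= Dz.
Proof.
move=> g0 Ow h.
rewrite -lee_fin; apply: le_trans h.
rewrite EFinM; apply: lee_wpmul2l; first by rewrite lee_fin.
rewrite /gapden.
apply: (@le_trans _ _ ((pval beta x gx x + norm2 (u - vpt beta x gx) ^+ 2 / 2 -
   norm2 (vpt beta x gx) ^+ 2 / 2 + om)%:E + (dotv w u)%:E)%E); last first.
  apply: leeD2l; apply: ereal_sup_ubound; exists w => //.
rewrite -EFinD lee_fin /Deltap /pval !norm2_sq.
move: (vpt beta x gx) => v.
have sq := dotv_ge0 (w + u - v).
rewrite !(dotvDl, dotvDr, dotvBl, dotvBr, dotvNl, dotvNr) ?(dotvC u w) ?(dotvC v w) ?(dotvC v u) in sq.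
rewrite !(dotvDl, dotvDr, dotvBl, dotvBr, dotvNl, dotvNr) ?(dotvC u w) ?(dotvC v w) ?(dotvC v u).
lra.
Qed.
End G.


Lemma dec_to0 (R : realType) (F D : nat -> R) (c lb : R) : 0 < c ->
  (forall k, lb <= F k) -> (forall k, 0 <= D k) ->
  (forall k, c * D k <= F k - F k.+1) -> D @ \oo --> 0.
Proof.
move=> c0 Flb D0 step.
have ni : nonincreasing_seq F.
  apply/nonincreasing_seqP => k; rewrite -subr_ge0.
  exact: le_trans (mulr_ge0 (ltW c0) (D0 k)) (step k).
have cF : cvgn F.
  apply: nonincreasing_is_cvgn => //; exists lb => _ [k _ <-]; exact: Flb.
have h : (fun k => (F k - F k.+1) / c) @ \oo --> (limn F - limn F) / c.
  apply: cvgM; last exact: cvg_cst.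
  apply: cvgB => //; by rewrite cvg_shiftS.
rewrite subrr mul0r in h.
apply: (@squeeze_cvgr _ _ _ _ (fun=> 0) (fun k => (F k - F k.+1) / c)) => //; last exact: cvg_cst.
near=> k; rewrite D0 /= ler_pdivlMr // mulrC; exact: step.
Unshelve. all: end_near.
Qed.


Unset Implicit Arguments. Set Strict Implicit.

Theorem lemma3p3 (R : realType) (n : nat) (Omega : set 'rV[R]_n)
  (f : 'rV[R]_n -> R) (g : 'rV[R]_n -> 'rV[R]_n) (flow L : R)
  (omega : nat -> R) (beta gamma eta alpha theta : R)
  (x z zstar : nat -> 'rV[R]_n) :
  Omega !=set0 -> closed Omega -> convexR Omega ->
  (forall y, Omega y -> is_gradient f y (g y)) ->
  (forall y, Omega y -> flow <= f y) ->
  0 < L ->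
  (forall y w, Omega y -> Omega w -> norm2 (g y - g w) <= L * norm2 (y - w)) ->
  (forall k, 0 <= omega k) -> cvg (series omega @ \oo) ->
  0 < gamma < 1 ->
  (IGPM_noLS Omega g L beta gamma omega x z \/
   IGPM_LS Omega f g eta alpha beta theta gamma omega x z) ->
  (forall k, Omega (zstar k) /\
     forall y, Omega y ->
       pval beta (x k) (g (x k)) (zstar k) <= pval beta (x k) (g (x k)) y) ->
  ((fun k => Deltap beta (x k) (g (x k)) (z k)) @ \oo --> 0) /\
  ((fun k => Deltap beta (x k) (g (x k)) (zstar k)) @ \oo --> 0).
Proof.
move=> ne cl cO grad flb L0 Lip om0 omS gam01 alg zs.
have /andP [g0 g1] := gam01.
have ip k : inexact_proj Omega beta gamma (x k) (g (x k)) (omega k) (z k).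
  by case: alg => [[_ [_ [_ h]]] | [_ [_ [_ [_ [_ h]]]]]]; case: (h k).
have Ox k : Omega (x k).
  elim: k => [|k IH]; first by case: alg => [[_ [_ [h _]]] | [_ [_ [_ [_ [h _]]]]]].
  have [Oz _] := ip k.
  case: alg => [[_ [_ [_ h]]] | [_ [/andP [a0 a1] [_ [/andP [th0 th1] [_ h]]]]]].
    by rewrite (proj2 (h k)).
  have [_ [i [_ [_ ->]]]] := h k.
  apply: convex_seg => //.
    by rewrite mulr_ge0 ?exprn_ge0 // ltW.
  apply: mulr_ile1; [exact: exprn_ge0 (ltW th0) | exact: ltW | exact: exprn_ile1 (ltW th0) (ltW th1) | exact: a1].
pose Dz k := Deltap beta (x k) (g (x k)) (z k).
pose Ds k := Deltap beta (x k) (g (x k)) (zstar k).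
have Dz0 k : 0 <= Dz k by have [_ [h _]] := ip k.
have Dzs k : Dz k <= Ds k.
  have [Oz _] := ip k; have := (zs k).2 _ Oz.
  rewrite /Dz /Ds /Deltap; lra.
have wd k : gamma * (Ds k + omega k) <= Dz k + omega k.
  have [_ [_ [u hu]]] := ip k.
  exact: (weak_dual (ltW g0) (zs k).1 hu).
have omc : omega @ \oo --> 0 by apply: cvg_series_cvg_0.
have part1 : Dz @ \oo --> 0.
  case: alg => [[bpos [bL [_ h]]] | [/andP [e0 e1] [/andP [a0 a1] [bpos [/andP [th0 th1] [_ h]]]]]].
    apply: (@dec_to0 _ (fun k => f (x k)) Dz beta^-1 flow) => //.
    - by rewrite invr_gt0.
    - by move=> k; apply: flb.
    move=> k; have [ipk xe] := h k; have [Oz _] := ipk.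
    have hd := descent cO grad L0 Lip (Ox k) Oz ler01 (lexx 1).
    have e : x k + 1 *: (z k - x k) = z k by rewrite scale1r addrC subrK.
    rewrite e expr1n !mul1r in hd; rewrite xe /Dz Deltap_eq.
    set D := dotv (z k - x k) (z k - x k) in hd *.
    set G := dotv (g (x k)) (z k - x k) in hd *.
    have LB : L * beta <= 1 by move: bL; rewrite ler_pdivlMr // mulrC.
    have Lc : L <= beta^-1 by rewrite -div1r ler_pdivlMr.
    have D0 : 0 <= D := dotv_ge0 _.
    have LD := ler_wpM2r D0 Lc.
    have cb : beta^-1 * beta = 1 by rewrite mulVf // gt_eqF.
    rewrite mulr1 in hd; rewrite mulrBr [beta^-1 * (beta * G)]mulrA cb mul1r.
    lra.
  pose m := Num.min alpha (theta * (1 - eta) / (beta * L)).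
  have m0 : 0 < m by rewrite lt_min a0 /= !mulr_gt0 ?invr_gt0 ?mulr_gt0 ?subr_gt0.
  apply: (@dec_to0 _ (fun k => f (x k)) Dz (eta * m / beta) flow) => //.
  - by rewrite !mulr_gt0 ?invr_gt0.
  - by move=> k; apply: flb.
  move=> k; have [ipk [i [arm [fail xe]]]] := h k; have [Oz _] := ipk.
  have hDz := Deltap_eq beta (x k) (g (x k)) (z k).
  rewrite -/(Dz k) in hDz.
  set D := dotv (z k - x k) (z k - x k) in hDz.
  set G := dotv (g (x k)) (z k - x k) in hDz.
  have D0 : 0 <= D := dotv_ge0 _.
  have Dzk := Dz0 k.
  have tm : m <= theta ^+ i * alpha.
    case: i arm fail xe => [|j] arm fail xe.
      by rewrite expr0 mul1r ge_min lexx.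
    rewrite exprS -mulrA.
    set t' := theta ^+ j * alpha.
    have t'0 : 0 < t' by rewrite mulr_gt0 ?exprn_gt0.
    have t'1 : t' <= 1.
      by apply: mulr_ile1; [exact: exprn_ge0 (ltW th0) | exact: ltW | exact: exprn_ile1 (ltW th0) (ltW th1) | exact: a1].
    have nf := fail j (ltnSn j).
    have hd := descent cO grad L0 Lip (Ox k) Oz (ltW t'0) t'1.
    rewrite -/D -/G in hd.
    have A : f (x k) + eta * t' * G < f (x k + t' *: (z k - x k)).
      by rewrite ltNge; apply/negP.
    have B : t' * (eta * G) < t' * (G + L * t' / 2 * D).
      have -> : t' * (eta * G) = eta * t' * G by ring.
      have -> : t' * (G + L * t' / 2 * D) = t' * G + L * t' ^+ 2 / 2 * D by ring.
      lra.
    rewrite ltr_pM2l // in B.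
    have C : (1 - eta) * (D / 2) <= (1 - eta) * (beta * - G).
      by apply: ler_wpM2l; [rewrite subr_ge0 ltW | lra].
    have E : (1 - eta) * (D / 2) < beta * (L * t' / 2 * D).
      have : (1 - eta) * (beta * - G) < beta * (L * t' / 2 * D).
        have -> : (1 - eta) * (beta * - G) = beta * ((1 - eta) * - G) by ring.
        rewrite ltr_pM2l //; lra.
      lra.
    have E2 : 0 < D * (beta * L * t' - (1 - eta)).
      have -> : D * (beta * L * t' - (1 - eta)) = 2 * (beta * (L * t' / 2 * D) - (1 - eta) * (D / 2)) by field.
      by rewrite mulr_gt0 // subr_gt0.
    have E3 : 0 < beta * L * t' - (1 - eta).
      rewrite ltNge; apply/negP => hle.
      have := mulr_ge0_le0 D0 hle; lra.
    have E4 : (1 - eta) / (beta * L) < t'.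
      by rewrite ltr_pdivrMr ?mulr_gt0 // mulrC; lra.
    rewrite ge_min; apply/orP; right.
    rewrite -mulrA ler_wpM2l ?ltW //.
  set t := theta ^+ i * alpha in tm arm xe.
  rewrite xe; rewrite /armijo -/G in arm.
  have P1 : Dz k / beta <= - G by rewrite ler_pdivrMr //; lra.
  have P2 : m * (Dz k / beta) <= t * (- G).
    by apply: ler_pM => //; [exact: ltW | rewrite divr_ge0 // ltW].
  have P3 := ler_wpM2l (ltW e0) P2.
  have -> : eta * m / beta * Dz k = eta * (m * (Dz k / beta)) by ring.
  have e3 : eta * (t * - G) = - (eta * t * G) by ring.
  rewrite e3 in P3.
  lra.
split => //.
apply: (@squeeze_cvgr _ _ _ _ (fun=> 0) (fun k => (Dz k + omega k) / gamma)).
- near=> k; rewrite /= (le_trans (Dz0 k) (Dzs k)) /= ler_pdivlMr // mulrC.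
  have := wd k; rewrite mulrDr; have := mulr_ge0 (ltW g0) (om0 k); rewrite /Ds; lra.
- exact: cvg_cst.
- have h : (fun k => (Dz k + omega k) / gamma) @ \oo --> (0 + 0) * gamma^-1.
    by apply: cvgM; [apply: cvgD | exact: cvg_cst].
  by rewrite add0r mul0r in h.
Unshelve. all: end_near.
Qed.
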